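(* Let $g=\frac{\sqrt5-1}2$, $g\le\alpha<\beta\le1$, $x\in[\alpha-1,\alpha)$, $z\in[\beta-1,\beta)$ with $z-x\in\{0,1\}$ or $x+z\in\{0,1\}$. Let $n\ge1$ be such that $T_\alpha^{n-1}(x)<\frac{\beta}{\beta+1}$. Then there is some $k\ge1$ such that $T_\beta^k(z)-T_\alpha^n(x)\in\{0,1\}$ or $T_\alpha^n(x)+T_\beta^k(z)\in\{0,1\}$.
   Context: For $\alpha\in[\tfrac12,1]$, $T_\alpha:[\alpha-1,\alpha)\to[\alpha-1,\alpha)$ is $T_\alpha(x)=\frac1x-\lfloor\frac1x+1-\alpha\rfloor$ for $x\ne0$, $T_\alpha(0)=0$. *)

(* Defs.v *)
From Stdlib Require Import Reals.
Open Scope R_scope.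

(* floor of a real: up r is the unique integer with r < up r <= r + 1 *)
Definition rfloor (r : R) : R := IZR (up r - 1).

Definition T (alpha x : R) : R :=
  if Req_EM_T x 0 then 0 else / x - rfloor (/ x + 1 - alpha).

Definition g : R := (sqrt 5 - 1) / 2.

(* Main.v *)
Require Import Defs.
From Stdlib Require Import Reals Lra Lia Psatz.
Open Scope R_scope.

Lemma g_facts : 0 < g /\ g * g = 1 - g /\ 1/2 < g /\ g < 1.
Proof.
  unfold g. pose proof (sqrt_sqrt 5 ltac:(lra)) as H. pose proof (sqrt_pos 5).
  assert (2 < sqrt 5) by nra. assert (sqrt 5 < 3) by nra.
  repeat split; nra.
Qed.

Lemma Tfact b y : y <> 0 -> exists a : Z, T b y = / y - IZR a.
Proof.
  intro Hy. unfold T. destruct (Req_EM_T y 0); [contradiction|].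
  exists (up (/ y + 1 - b) - 1)%Z. unfold rfloor. reflexivity.
Qed.

Lemma T0 b : T b 0 = 0.
Proof. unfold T. destruct (Req_EM_T 0 0); [reflexivity|contradiction]. Qed.

Lemma rfloor_spec r : rfloor r <= r < rfloor r + 1.
Proof. unfold rfloor; rewrite minus_IZR; destruct (archimed r); simpl; lra. Qed.

Lemma rfloor_unique m r : IZR m <= r < IZR m + 1 -> rfloor r = IZR m.
Proof.
  intros [H1 H2]. unfold rfloor. destruct (archimed r) as [H3 H4].
  assert (m < up r)%Z by (apply lt_IZR; lra).
  assert (up r < m + 2)%Z by (apply lt_IZR; rewrite plus_IZR; simpl; lra).
  f_equal. lia.
Qed.

Lemma T_range b y : 0 < b <= 1 -> b - 1 <= T b y < b.
Proof.
  intros Hb. unfold T. destruct (Req_EM_T y 0); [lra|].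
  pose proof (rfloor_spec (/ y + 1 - b)); lra.
Qed.

Lemma iter_range b y k : 0 < b <= 1 -> b - 1 <= y < b ->
  b - 1 <= Nat.iter k (T b) y < b.
Proof. intros Hb Hy. induction k; simpl; [auto| apply T_range; auto]. Qed.

Definition Rm u t := exists m : Z, t - u = IZR m \/ t + u = IZR m.
Definition Lst b u t := exists q, 0 < q /\ q * b <= 1 /\
  (exists m : Z, t = / q + IZR m) /\ (u = q \/ u = q - 1).

Lemma int01 m : -1 < IZR m -> IZR m < 2 -> m = 0%Z \/ m = 1%Z.
Proof.
  intros H1 H2.
  assert (-1 < m)%Z by (apply lt_IZR; simpl; lra).
  assert (m < 2)%Z by (apply lt_IZR; simpl; lra). lia.
Qed.

Lemma Rm_exact a b u t : g <= a -> a < b -> b <= 1 -> a - 1 <= u < a ->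
  b - 1 <= t < b -> Rm u t -> (t - u = 0 \/ t - u = 1 \/ u + t = 0 \/ u + t = 1).
Proof.
  intros Ha Hab Hb Hu Ht [m [Hm|Hm]]; pose proof g_facts as [G1 [G2 [G3 G4]]].
  - destruct (int01 m) as [->| ->]; [lra|lra| |]; simpl in Hm; lra.
  - destruct (int01 m) as [->| ->]; [lra|lra| |]; simpl in Hm; lra.
Qed.

Lemma L2 b s : 0 < b <= 1 -> 0 < s -> s * (1 + b) < b ->
  exists c : Z, T b (T b (1 - s)) = / s - IZR c.
Proof.
  intros Hb Hs Hsb.
  assert (Hs1 : s < 1) by nra.
  assert (E : T b (1 - s) = s / (1 - s)).
  { unfold T. destruct (Req_EM_T (1 - s) 0); [lra|].
    set (w := s / (1 - s)).
    assert (Hw : w * (1 - s) = s) by (unfold w; field; lra).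
    assert (Hw2 : / (1 - s) = 1 + w) by (unfold w; field; lra).
    assert (0 < w) by (unfold w; apply Rdiv_lt_0_compat; lra).
    assert (w < b) by nra.
    rewrite (rfloor_unique 1); rewrite Hw2; simpl; lra. }
  rewrite E. destruct (Tfact b (s / (1 - s))) as [a Ha].
  { assert (0 < s / (1 - s)) by (apply Rdiv_lt_0_compat; lra). lra. }
  exists (a + 1)%Z. rewrite Ha, plus_IZR. simpl. field. lra.
Qed.

Lemma Step a b u t : g <= a -> a < b -> b <= 1 -> a - 1 <= u < a ->
  b - 1 <= t < b -> Rm u t ->
  (Rm (T a u) (T b t) \/ Rm (T a u) (T b (T b t))) \/
  (Lst b (T a u) (T b t) /\ b <= u * (1 + b)).
Proof.
  intros Ha Hab Hb Hu Ht HR.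
  pose proof g_facts as [G1 [G2 [G3 G4]]].
  assert (Ka : a * (1 + a) >= 1) by nra.
  assert (Kb : b * (1 + a) > 1) by nra.
  assert (Kc : a * (1 + b) > 1) by nra.
  destruct (Rm_exact a b u t Ha Hab Hb Hu Ht HR) as [H|[H|[H|H]]].
  - destruct (Req_EM_T u 0) as [Hu0|Hu0].
    + assert (t = 0) by lra. subst. rewrite !T0. left; left. exists 0%Z; left; simpl; lra.
    + destruct (Tfact a u Hu0) as [ea Ea]. destruct (Tfact b t ltac:(lra)) as [eb Eb].
      left; left. exists (ea - eb)%Z. left. rewrite Ea, Eb, minus_IZR.
      replace t with u by lra. ring.
  - assert (Hu0 : u < 0) by lra.
    destruct (L2 b (- u) ltac:(lra) ltac:(lra) ltac:(nra)) as [c Ec].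
    replace (1 - - u) with t in Ec by lra.
    destruct (Tfact a u ltac:(lra)) as [ea Ea].
    left; right. exists (- (c + ea))%Z. right. rewrite Ec, Ea, opp_IZR, plus_IZR.
    field. lra.
  - destruct (Req_EM_T u 0) as [Hu0|Hu0].
    + assert (t = 0) by lra. subst. rewrite !T0. left; left. exists 0%Z; left; simpl; lra.
    + destruct (Tfact a u Hu0) as [ea Ea]. destruct (Tfact b t ltac:(lra)) as [eb Eb].
      left; left. exists (- ea - eb)%Z. right. rewrite Ea, Eb, minus_IZR, opp_IZR.
      replace t with (- u) by lra. field. lra.
  - assert (Hu0 : 0 < u) by lra.
    destruct (Rlt_le_dec (u * (1 + b)) b) as [Hl|Hl].
    + destruct (L2 b u ltac:(lra) Hu0 Hl) as [c Ec].
      replace (1 - u) with t in Ec by lra.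
      destruct (Tfact a u ltac:(lra)) as [ea Ea].
      left; right. exists (ea - c)%Z. left. rewrite Ec, Ea, minus_IZR. ring.
    + right. split; [|lra].
      set (iu := / u).
      assert (Hiu : u * iu = 1) by (unfold iu; field; lra).
      assert (Hiu0 : 0 < iu) by (unfold iu; apply Rinv_0_lt_compat; lra).
      assert (iu > 1) by nra.
      assert (b * iu <= 1 + b) by nra.
      assert (iu < 2 + a) by nra.
      assert (iu * a > 1) by nra.
      assert (iu > a) by nra.
      exists (iu - 1). split; [lra|]. split; [nra|]. split.
      * destruct (Tfact b t ltac:(lra)) as [c Ec]. exists (1 - c)%Z.
        rewrite Ec, minus_IZR. replace t with (1 - u) by lra. unfold iu. simpl.
        field. split; lra.
      * destruct (Tfact a u ltac:(lra)) as [ea Ea].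
        pose proof (T_range a u ltac:(lra)) as Hr. rewrite Ea in Hr. fold iu in Hr.
        assert (0 < ea)%Z by (apply lt_IZR; simpl; lra).
        assert (ea < 3)%Z by (apply lt_IZR; simpl; lra).
        rewrite Ea. fold iu.
        assert (ea = 1 \/ ea = 2)%Z as [-> | ->] by lia; simpl; [left|right]; lra.
Qed.

Lemma StepL a b u t : g <= a -> a < b -> b <= 1 -> a - 1 <= u < a ->
  b - 1 <= t < b -> Lst b u t ->
  Rm (T a u) t \/ Rm (T a u) (T b t).
Proof.
  pose proof g_facts as [G1 [G2 [G3 G4]]].
  intros Ha Hab Hb Hu Ht [q [Hq0 [Hqb [[m Hm] [Hq|Hq]]]]].
  assert (Ka : a * (1 + a) >= 1) by nra.
  assert (Kc : a * (1 + b) > 1) by nra.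
  - destruct (Tfact a q ltac:(lra)) as [ea Ea]. left. exists (m + ea)%Z. left.
    rewrite Hq, Ea, Hm, plus_IZR. ring.
  - set (iq := / q) in *.
    assert (Hiq : q * iq = 1) by (unfold iq; field; lra).
    assert (0 < iq) by (unfold iq; apply Rinv_0_lt_compat; lra).
    assert (iq >= b) by nra.
    assert (iq * a <= 1) by nra.
    assert (iq < 1 + b) by (apply (Rmult_lt_reg_l a); [lra| nra]).
    assert (m < 0)%Z by (apply lt_IZR; simpl; lra).
    assert (-2 < m)%Z by (apply lt_IZR; simpl; lra).
    assert (m = -1)%Z by lia. subst m. simpl in Hm.
    destruct (Req_EM_T q 1) as [Hq1|Hq1].
    + assert (Hu0 : u = 0) by lra. assert (iq = 1) by (unfold iq; rewrite Hq1; apply Rinv_1).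
      left. exists 0%Z. left. rewrite Hu0, T0. simpl. lra.
    + assert (Hiq1 : iq <> 1) by (intro E; apply Hq1; nra).
      destruct (Tfact a u ltac:(lra)) as [ea Ea].
      destruct (Tfact b t ltac:(lra)) as [eb Eb].
      right. exists (-1 - ea - eb)%Z. right.
      rewrite Ea, Eb, !minus_IZR, Hm, Hq. unfold iq. simpl.
      field. repeat split; try lra.
Qed.

Definition J a b x z m := exists k,
  (Rm (Nat.iter m (T a) x) (Nat.iter k (T b) z) /\ (1 <= m -> 1 <= k)%nat) \/
  ((1 <= k)%nat /\ Lst b (Nat.iter m (T a) x) (Nat.iter k (T b) z)).

Lemma J_all a b x z m : g <= a -> a < b -> b <= 1 -> a - 1 <= x < a ->
  b - 1 <= z < b -> Rm x z -> J a b x z m.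
Proof.
  intros Ha Hab Hb Hx Hz H0.
  pose proof g_facts as [G1 [G2 [G3 G4]]].
  induction m.
  - exists 0%nat. left. split; [exact H0| lia].
  - destruct IHm as [k [[HR Hk]|[Hk HL]]].
    + destruct (Step a b _ _ Ha Hab Hb (iter_range a x m ltac:(lra) Hx)
        (iter_range b z k ltac:(lra) Hz) HR) as [[H|H]|[H _]].
      * exists (S k). left. split; [exact H|lia].
      * exists (S (S k)). left. split; [exact H|lia].
      * exists (S k). right. split; [lia|exact H].
    + destruct (StepL a b _ _ Ha Hab Hb (iter_range a x m ltac:(lra) Hx)
        (iter_range b z k ltac:(lra) Hz) HL) as [H|H].
      * exists k. left. split; [exact H|lia].
      * exists (S k). left. split; [exact H|lia].
Qed.

Theorem lemma4p3 (alpha beta x z : R) (n : nat) :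
  g <= alpha -> alpha < beta -> beta <= 1 ->
  alpha - 1 <= x -> x < alpha ->
  beta - 1 <= z -> z < beta ->
  (z - x = 0 \/ z - x = 1 \/ x + z = 0 \/ x + z = 1) ->
  (1 <= n)%nat ->
  Nat.iter (n - 1) (T alpha) x < beta / (beta + 1) ->
  exists k : nat, (1 <= k)%nat /\
    (Nat.iter k (T beta) z - Nat.iter n (T alpha) x = 0 \/
     Nat.iter k (T beta) z - Nat.iter n (T alpha) x = 1 \/
     Nat.iter n (T alpha) x + Nat.iter k (T beta) z = 0 \/
     Nat.iter n (T alpha) x + Nat.iter k (T beta) z = 1).
Proof.
  intros Ha Hab Hb Hx1 Hx2 Hz1 Hz2 Hrel Hn Hhyp.
  pose proof g_facts as [G1 [G2 [G3 G4]]].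
  destruct n as [|n']; [lia|].
  replace (S n' - 1)%nat with n' in Hhyp by lia.
  assert (H0 : Rm x z).
  { destruct Hrel as [H|[H|[H|H]]].
    - exists 0%Z; left; simpl; lra.
    - exists 1%Z; left; simpl; lra.
    - exists 0%Z; right; simpl; lra.
    - exists 1%Z; right; simpl; lra. }
  assert (Hh : Nat.iter n' (T alpha) x * (1 + beta) < beta).
  { assert (Nat.iter n' (T alpha) x * (1 + beta) < beta / (beta + 1) * (1 + beta))
      by (apply Rmult_lt_compat_r; lra).
    replace (beta / (beta + 1) * (1 + beta)) with beta in H by (field; lra). exact H. }
  assert (Hfin : exists k, (1 <= k)%nat /\
            Rm (Nat.iter (S n') (T alpha) x) (Nat.iter k (T beta) z)).
  { destruct (J_all alpha beta x z n' Ha Hab Hb ltac:(lra) ltac:(lra) H0)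
      as [k [[HR Hk]|[Hk HL]]].
    - destruct (Step alpha beta _ _ Ha Hab Hb (iter_range alpha x n' ltac:(lra) ltac:(lra))
        (iter_range beta z k ltac:(lra) ltac:(lra)) HR) as [[H|H]|[_ H]].
      + exists (S k). split; [lia|exact H].
      + exists (S (S k)). split; [lia|exact H].
      + lra.
    - destruct (StepL alpha beta _ _ Ha Hab Hb (iter_range alpha x n' ltac:(lra) ltac:(lra))
        (iter_range beta z k ltac:(lra) ltac:(lra)) HL) as [H|H].
      + exists k. split; [lia|exact H].
      + exists (S k). split; [lia|exact H]. }
  destruct Hfin as [k [Hk HR]]. exists k. split; [exact Hk|].
  apply (Rm_exact alpha beta); [lra|lra|lra| apply iter_range; lra
    | apply iter_range; lra | exact HR].
Qed.
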